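(* Let $n$ be a positive integer, let $x_0$ be a positive odd integer not divisible by $3$, let $m_0$ be an integer with $0 \le m_0 < 2\cdot 3^n$, and let $m$ be a nonnegative integer with $m \equiv m_0 \pmod{2\cdot 3^n}$. Suppose $x_1 = (2^{m_0}x_0-1)/3$ and $y_1 = (2^{m}x_0-1)/3$ are odd integers. Then $y_1 \equiv x_1 \pmod{2\cdot 3^n}$. *)

(* Defs.v *)
From Stdlib Require Import ZArith.

(* Main.v *)
Require Import Defs.
From Stdlib Require Import ZArith Lia.
Open Scope Z_scope.

Lemma key (n : nat) : (3 ^ (Z.of_nat n + 1) | 4 ^ (3 ^ Z.of_nat n) - 1).
Proof.
  induction n as [|n IH].
  - simpl. exists 1. reflexivity.
  - rewrite Nat2Z.inj_succ.
    destruct IH as [t Ht].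
    set (a := 4 ^ 3 ^ Z.of_nat n) in Ht.
    assert (E : 4 ^ 3 ^ Z.succ (Z.of_nat n) = a ^ 3).
    { unfold a. rewrite Z.pow_succ_r by lia. rewrite Z.mul_comm, Z.pow_mul_r; lia. }
    rewrite E.
    assert (Ha : a = 1 + t * 3 ^ (Z.of_nat n + 1)) by lia.
    rewrite Ha.
    set (P := 3 ^ (Z.of_nat n + 1)).
    assert (HP : 3 ^ (Z.succ (Z.of_nat n) + 1) = P * 3).
    { unfold P. replace (Z.succ (Z.of_nat n) + 1) with (Z.succ (Z.of_nat n + 1)) by lia.
      rewrite Z.pow_succ_r by lia. ring. }
    rewrite HP.
    assert (HR : P = 3 * 3 ^ Z.of_nat n).
    { unfold P. rewrite Z.pow_add_r by lia. ring. }
    exists (t * (1 + t * P + t * t * P * 3 ^ Z.of_nat n)). rewrite HR. ring.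
Qed.

Lemma powdiv (d a k : Z) : 0 <= k -> (d | a - 1) -> (d | a ^ k - 1).
Proof.
  intros Hk H. rewrite <- (Z2Nat.id k Hk). induction (Z.to_nat k) as [|j IH].
  - simpl. exists 0. ring.
  - rewrite Nat2Z.inj_succ, Z.pow_succ_r by lia.
    replace (a * a ^ Z.of_nat j - 1) with (a * (a ^ Z.of_nat j - 1) + (a - 1)) by ring.
    apply Z.divide_add_r; [apply Z.divide_mul_r|]; assumption.
Qed.

Theorem theorem9 (n : nat) (x0 m0 m x1 y1 : Z) :
  (0 < n)%nat ->
  0 < x0 -> Z.Odd x0 -> ~ (3 | x0) ->
  0 <= m0 < 2 * 3 ^ Z.of_nat n ->
  0 <= m ->
  m mod (2 * 3 ^ Z.of_nat n) = m0 mod (2 * 3 ^ Z.of_nat n) ->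
  3 * x1 = 2 ^ m0 * x0 - 1 ->
  3 * y1 = 2 ^ m * x0 - 1 ->
  Z.Odd x1 -> Z.Odd y1 ->
  y1 mod (2 * 3 ^ Z.of_nat n) = x1 mod (2 * 3 ^ Z.of_nat n).
Proof.
  intros _ Hx0 _ _ Hm0 Hm Hmod Hx1 Hy1 Ox1 Oy1.
  set (Q := 3 ^ Z.of_nat n) in *.
  assert (HQ : 0 < Q) by (apply Z.pow_pos_nonneg; lia).
  set (N := 2 * Q) in *.
  assert (HN : 0 < N) by lia.
  rewrite (Z.mod_small m0) in Hmod by lia.
  set (k := m / N).
  assert (Hk : 0 <= k) by (apply Z.div_pos; lia).
  assert (Hmk : m = m0 + N * k) by (pose proof (Z.div_mod m N); lia).
  assert (E : 2 ^ m = 2 ^ m0 * (4 ^ Q) ^ k).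
  { rewrite Hmk, Z.pow_add_r by nia. f_equal.
    unfold N. rewrite <- Z.mul_assoc, Z.pow_mul_r by nia.
    rewrite Z.pow_mul_r by lia. reflexivity. }
  assert (Hd : (3 ^ (Z.of_nat n + 1) | (4 ^ Q) ^ k - 1)).
  { apply powdiv; [lia| apply key]. }
  assert (Hdiff : 3 * (y1 - x1) = 2 ^ m0 * x0 * ((4 ^ Q) ^ k - 1)).
  { rewrite E in Hy1. nia. }
  assert (H3 : (Q | y1 - x1)).
  { apply (Z.mul_divide_cancel_l _ _ 3); [lia|].
    rewrite Hdiff. replace (3 * Q) with (3 ^ (Z.of_nat n + 1)).
    - apply Z.divide_mul_r. exact Hd.
    - unfold Q. rewrite Z.pow_add_r by lia. ring. }
  destruct H3 as [e He].
  assert (Qodd : Z.odd Q = true).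
  { unfold Q. destruct n as [|n']. reflexivity. rewrite Z.odd_pow by lia. reflexivity. }
  assert (Ee : Z.even e = true).
  { destruct Ox1 as [a Ha]. destruct Oy1 as [b Hb].
    assert (Z.even (e * Q) = true).
    { rewrite <- He. replace (y1 - x1) with (2 * (b - a)) by lia.
      rewrite Z.even_mul. reflexivity. }
    rewrite Z.even_mul in H. rewrite <- (Z.negb_odd Q), Qodd in H.
    destruct (Z.even e); auto. }
  apply Z.even_spec in Ee. destruct Ee as [f Hf].
  replace y1 with (x1 + f * N) by (unfold N; lia).
  apply Z.mod_add. lia.
Qed.
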